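(* Let $g$ be a function assigning to each prime $p$ a set of primes $g(p)$ with $p\in g(p)$, let $h(p)=\mathfrak{G}_{g(p)}$, and let $\mathfrak{F}$ be the local formation locally defined by $h$. Let $G$ be a finite group, $K\trianglelefteq G$, and $H/K$ a chief factor of $G$. Then $H/K\le \mathrm{Int}_{\mathfrak{F}}(G/K)$ if and only if $G/C_G(H/K)\in h(p)$ for every $p\in\pi(H/K)$.
   Context: $\pi(X)$ is the set of primes dividing $|X|$; $\mathfrak{G}_\sigma$ is the class of all finite $\sigma$-groups. The local formation locally defined by $h$ is $\mathfrak{F}=\{G : G/C_G(H/K)\in h(p)$ for every chief factor $H/K$ of $G$ and every $p\in\pi(H/K)\}$. An $\mathfrak{F}$-maximal subgroup of $G$ is a subgroup in $\mathfrak{F}$ maximal among such subgroups; $\mathrm{Int}_{\mathfrak{F}}(G)$ is the intersection of all $\mathfrak{F}$-maximal subgroups of $G$. *)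

(* Defs.v *)
From mathcomp Require Import all_boot all_fingroup all_solvable.
Set Implicit Arguments.
Unset Strict Implicit.
Unset Printing Implicit Defensive.
Local Open Scope group_scope.

Definition sect_cent (gT : finGroupType) (X H K : {set gT}) : {set gT} :=
  [set x in X | [forall h in H, [~ h, x] \in K]].

(* Membership of X in the local formation F locally defined by
   h(p) = G_{g(p)}: for every chief factor H/K of X and every prime
   p dividing |H/K|, X / C_X(H/K) is a g(p)-group. *)
Definition inF (g : nat -> nat_pred) (gT : finGroupType) (X : {set gT}) : bool :=
  [forall K : {group gT}, forall H : {group gT},
     chief_factor X K H ==>
     [forall p : 'I_#|H / K|.+1, (nat_of_ord p \in \pi(H / K)) ==>
        (g (nat_of_ord p)).-group (X / sect_cent X H K)]].

Definition Fmaximal (g : nat -> nat_pred) (gT : finGroupType) (G X : {set gT}) : bool :=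
  [&& X \subset G, inF g X &
      [forall Y : {group gT}, [&& X \subset Y, Y \subset G & inF g Y] ==> (Y == X :> {set gT})]].

Definition IntF (g : nat -> nat_pred) (gT : finGroupType) (G : {set gT}) : {set gT} :=
  \bigcap_(X : {group gT} | Fmaximal g G X) (X : {set gT}).

(* Main.v *)
Require Import Defs.
From mathcomp Require Import all_boot all_fingroup all_solvable.
Set Implicit Arguments.
Unset Strict Implicit.
Unset Printing Implicit Defensive.
Local Open Scope group_scope.
Section S.
Variable g : nat -> nat_pred.
Variable gT : finGroupType.
Implicit Types (X H K G N A B Q M Y : {group gT}).

Lemma sect_centP (X H K : {set gT}) x :
  reflect (x \in X /\ forall h, h \in H -> [~ h, x] \in K) (x \in sect_cent X H K).
Proof.
rewrite /sect_cent inE; apply: (iffP andP) => [[-> /forall_inP hh]|[-> hh]]; split => //.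
by apply/forall_inP.
Qed.

Lemma sect_cent_group X H K : X \subset 'N(K) -> group_set (sect_cent X H K).
Proof.
move=> nKX; apply/group_setP; split.
  by apply/sect_centP; split=> // h _; rewrite commg1 group1.
move=> x y /sect_centP[Xx hx] /sect_centP[Xy hy]; apply/sect_centP; split; first exact: groupM.
move=> h Hh; rewrite commgMJ groupM ?hy // memJ_norm ?hx //.
exact: subsetP nKX y Xy.
Qed.

Lemma norms_conj_closed (A : {set gT}) (B : {group gT}) :
  (forall x y, x \in A -> y \in B -> x ^ y \in A) -> B \subset 'N(A).
Proof.
move=> hA; apply/normsP => y By; apply/eqP; rewrite eqEcard cardJg leqnn andbT.
apply/subsetP => z; rewrite mem_conjg => Az.
by have := hA _ _ Az By; rewrite conjgKV.
Qed.

Lemma sect_cent_norm X H K : X \subset 'N(H) -> X \subset 'N(K) ->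
  X \subset 'N(sect_cent X H K).
Proof.
move=> nHX nKX; apply: norms_conj_closed => x y /sect_centP[Xx hx] Xy.
apply/sect_centP; split; first by rewrite groupJ.
move=> h Hh; have Xyi : y^-1 \in X by rewrite groupV.
have Hh' : h ^ y^-1 \in H by rewrite memJ_norm // (subsetP nHX).
have -> : h = (h ^ y^-1) ^ y by rewrite conjgKV.
by rewrite -conjRg memJ_norm ?hx // (subsetP nKX).
Qed.

Lemma sect_cent_sub X H K : sect_cent X H K \subset X.
Proof. by apply/subsetP => x /sect_centP[]. Qed.

Lemma chiefP X B A : chief_factor X B A ->
  [/\ B \proper A, X \subset 'N(B), A <| X &
     forall M, M \proper A -> X \subset 'N(M) -> B \subset M -> M :=: B].
Proof.
case/andP => /maxgroupP[/andP[pBA nBX] maxB] nAX; split=> // M pMA nMX sBM.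
by apply: maxB => //; rewrite pMA.
Qed.

Lemma chief_intro X B A : B \proper A -> X \subset 'N(B) -> A <| X ->
  (forall M, M \proper A -> X \subset 'N(M) -> B \subset M -> M :=: B) ->
  chief_factor X B A.
Proof.
move=> pBA nBX nAX hM; apply/andP; split=> //; apply/maxgroupP; split; first by rewrite pBA.
by move=> M /andP[pMA nMX] sBM; apply: hM.
Qed.

Lemma pi_le (n p : nat) : p \in \pi(n) -> p < n.+1.
Proof. by rewrite mem_primes => /and3P[_ n0 dv]; rewrite ltnS dvdn_leq. Qed.

Lemma inF_use X B A p : inF g X -> chief_factor X B A -> p \in \pi(A / B) ->
  (g p).-group (X / sect_cent X A B).
Proof.
move=> /forallP /(_ B) /forallP /(_ A) /implyP /(_ _) hF cf pp.
have /forallP /(_ (Ordinal (pi_le pp))) /implyP := hF cf.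
by apply.
Qed.

Lemma inF_intro X : (forall B A, chief_factor X B A -> forall p, p \in \pi(A / B) ->
  (g p).-group (X / sect_cent X A B)) -> inF g X.
Proof.
move=> h; apply/forallP => B; apply/forallP => A; apply/implyP => cf.
apply/forallP => p; apply/implyP => pp; exact: h.
Qed.

Lemma FQ q p X B A Q : inF g X -> chief_factor X B A -> p \in \pi(A / B) ->
  q \notin g p -> q.-group Q -> Q \subset X -> Q \subset sect_cent X A B.
Proof.
move=> FX cf pp qg qQ sQX; have [_ nBX nAX _] := chiefP cf.
pose C := Group (sect_cent_group A nBX).
have nCX : X \subset 'N(C) := sect_cent_norm (normal_norm nAX) nBX.
have gX : (g p).-group (X / C) by apply: inF_use.
have gQ : (g p).-group (Q / C) := pgroupS (quotientS C sQX) gX.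
have qQC : q.-group (Q / C) := quotient_pgroup C qQ.
have nCQ : Q \subset 'N(C) := subset_trans sQX nCX.
rewrite -(quotient_sub1 nCQ) subG1 trivg_card1; apply/eqP.
apply: (pnat_1 qQC); apply: sub_in_pnat gQ => r _ rg.
by rewrite !inE; apply: contraNneq qg => <-.
Qed.

Hypothesis hg_self : forall p : nat, prime p -> p \in g p.

Lemma qgroup_inF (q : nat) Q : q.-group Q -> inF g Q.
Proof.
move=> qQ; apply: inF_intro => B A cf r rpi.
have [_ nBQ nAQ _] := chiefP cf.
pose C := Group (sect_cent_group A nBQ).
have qQC : q.-group (Q / C) := quotient_pgroup C qQ.
have r_pr : prime r by move: rpi; rewrite mem_primes => /andP[].
have rdQ : r %| #|Q|.
  move: rpi; rewrite mem_primes => /and3P[_ _ rd].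
  apply: dvdn_trans rd _; apply: dvdn_trans (dvdn_morphim _ A) (cardSg (normal_sub nAQ)).
have rq : r = q by have := pgroupP qQ r r_pr rdQ; rewrite inE => /eqP.
by apply: pi_pnat qQC _; rewrite -rq hg_self.
Qed.

Lemma exists_Fmax G Q : Q \subset G -> inF g Q ->
  exists2 X : {group gT}, Fmaximal g G X & Q \subset X.
Proof.
move=> sQG FQ'.
have [X mX sQX] := @maxgroup_exists _ (fun Y : {group gT} => (Y \subset G) && inF g Y) Q
   (introT andP (conj sQG FQ')).
exists X => //; case/maxgroupP: mX => /andP[sXG FX] maxX.
apply/and3P; split => //; apply/forallP => Y; apply/implyP => /and3P[sXY sYG FY].
by apply/eqP; apply: maxX => //; rewrite sYG.
Qed.

Lemma pdiv_normal G N M p : minnormal N G -> p \in \pi(N) -> M \subset N ->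
  N \subset 'N(M) -> M :!=: 1 -> p \in \pi(M).
Proof.
move=> /mingroupP[/andP[ntN nNG] minN] pN sMN nMN ntM.
apply: contraT => pM.
have p'M : p^'.-group M.
  apply/pgroupP => r r_pr rd; rewrite !inE; apply: contraNneq pM => <-.
  by rewrite mem_primes r_pr cardG_gt0.
have sMO : M \subset 'O_p^'(N) by apply: pcore_max => //; rewrite /normal sMN.
have nOG : G \subset 'N('O_p^'(N)) := char_norm_trans (pcore_char _ _) nNG.
have ntO : 'O_p^'(N) :!=: 1 by apply: contraNneq ntM => O1; rewrite -subG1 -O1.
have ON : 'O_p^'(N) :=: N by apply: minN; rewrite ?ntO ?pcore_sub.
have := pcore_pgroup p^' N; rewrite ON => /pnatPpi /(_ pN).
by rewrite inE /= inE eqxx.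
Qed.

Lemma comm_sect (X A B Q : {group gT}) : Q \subset sect_cent X A B -> [~: A, Q] \subset B.
Proof.
move=> sQC; rewrite gen_subG; apply/subsetP => _ /imset2P[a y Aa Qy ->].
by have /sect_centP[_ h] := subsetP sQC y Qy; apply: h.
Qed.

Lemma abelian_case (p q : nat) X N Q : inF g X -> p.-group N -> N \subset X ->
  q.-group Q -> Q \subset X -> q \notin g p -> p \in g p ->
  forall M, M \subset N -> X \subset 'N(M) -> Q \subset 'C(M).
Proof.
move=> FX pN sNX qQ sQX qg pg.
have pq : p != q by apply: contraNneq qg => <-.
have p'Q : p^'.-group Q.
  by apply: sub_in_pnat qQ => r _; rewrite !inE => /eqP ->; rewrite eq_sym.
move=> M; elim: {M}_.+1 {-2}M (ltnSn #|M|) => // n IH M leMn sMN nMX.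
have [-> | ntM] := eqVneq M 1%G; first exact: cents1.
have [L mL _] := @maxgroup_exists _ (fun L : {group gT} => (L \proper M) && (X \subset 'N(L))) 1
  (introT andP (conj (introT idP (etrans (proper1G M) ntM)) (norms1 X))).
case/maxgroupP: mL => /andP[pLM nLX] maxL.
have sMX := subset_trans sMN sNX.
have nsMX : M <| X by rewrite /normal sMX nMX.
have cf : chief_factor X L M.
  apply: chief_intro pLM nLX nsMX _ => K pK nK sLK.
  by rewrite (maxL K) ?pK ?nK.
have pM : p.-group M := pgroupS sMN pN.
have nLM : M \subset 'N(L) := subset_trans sMX nLX.
have ppi : p \in \pi(M / L).
  have pML : p.-group (M / L) := quotient_pgroup L pM.
  have ntML : M / L != 1.
    apply: contraNneq (proper_subn pLM) => ML1.
    by rewrite -(quotient_sub1 nLM) ML1.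
  have [p_pr pd _] := pgroup_pdiv pML ntML.
  by rewrite mem_primes p_pr cardG_gt0.
have sQC := FQ FX cf ppi qg qQ sQX.
have cML : [~: M, Q] \subset L := comm_sect sQC.
have sLM := proper_sub pLM.
have cLQ : Q \subset 'C(L).
  apply: IH; [exact: leq_trans (proper_card pLM) leMn | exact: subset_trans sLM sMN | exact: nLX].
have co : coprime #|L| #|Q| := pnat_coprime (pgroupS sLM pM) p'Q.
have solL : solvable L := pgroup_sol (pgroupS sLM pM).
have nMQ := subset_trans sQX nMX.
have nLQ := subset_trans sQX nLX.
have E := coprime_norm_quotient_cent nMQ nLQ co solL.
have E2 : 'C_(M / L)(Q / L) = M / L.
  by apply/setIidPl; rewrite quotient_cents2.
rewrite E2 in E.
have nsLC : L <| 'C_M(Q)%G.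
  by rewrite /normal subsetI sLM centsC cLQ (subset_trans (subsetIl _ _) nLM).
have nsLM : L <| M by rewrite /normal sLM nLM.
have CM := quotient_inj nsLC nsLM E.
by rewrite centsC -CM subsetIr.
Qed.

Lemma cf_minnormal X M : minnormal M X -> M \subset X -> chief_factor X 1 M.
Proof.
move=> /mingroupP[/andP[ntM nMX] minM] sMX.
apply: chief_intro; [by rewrite proper1G | exact: norms1 | by rewrite /normal sMX nMX | ].
move=> K pK nK _; have sKM := proper_sub pK; apply/eqP; apply: contraTT pK => ntK.
have KM : K :=: M by apply: minM; [rewrite ntK nK | exact: sKM].
by rewrite KM properxx.
Qed.

Lemma sect_cent1 X M : sect_cent X M 1 \subset 'C(M).
Proof.
apply/subsetP => x /sect_centP[_ h]; apply/centP => y My.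
by apply/esym/commgP; rewrite -in_set1 h.
Qed.

Lemma nonabelian_case (p q : nat) G X N Q : minnormal N G -> ~~ abelian N -> p \in \pi(N) ->
  inF g X -> N \subset X -> X \subset 'N(N) -> q.-group Q -> Q \subset X -> q \notin g p ->
  Q \subset 'C(N).
Proof.
move=> minN nabN pN FX sNX nNX qQ sQX qg.
have [/andP[ntN nNG] _] := mingroupP minN.
have F1 : 'F(N) = 1.
  apply/eqP; apply: contraNT nabN => ntF.
  have FN : 'F(N) :=: N.
    by case/mingroupP: minN => _ -> //; rewrite ?ntF ?Fitting_sub // (char_norm_trans (Fitting_char N) nNG).
  have nilN : nilpotent N by rewrite -FN Fitting_nil.
  have [_ _ /is_abelemP[r _ /abelem_abelian]] := minnormal_solvable minN (subxx N) (nilpotent_sol nilN).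
  done.
pose D := <<\bigcup_(M : {group gT} | minnormal M X && (M \subset N)) M>>.
have cDQ : D \subset 'C(Q).
  rewrite gen_subG; apply/bigcupsP => M /andP[minM sMN].
  have [/andP[ntM nMX] _] := mingroupP minM.
  have sMX := subset_trans sMN sNX.
  have cf := cf_minnormal minM sMX.
  have ppi : p \in \pi(M / 1).
    change (p \in \pi(#|M / 1|)); rewrite card_quotient ?norms1 // indexg1.
    exact: pdiv_normal minN pN sMN (subset_trans sNX nMX) ntM.
  by rewrite centsC (subset_trans (FQ FX cf ppi qg qQ sQX)) ?sect_cent1.
have sDN : D \subset N by rewrite gen_subG; apply/bigcupsP => M /andP[].
have nDX : X \subset 'N(D).
  rewrite norms_gen // norms_bigcup //; apply/bigcapsP => M /andP[minM _].
  by case/mingroupP: minM => /andP[].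
have CD1 : 'C_N(D) = 1.
  apply/eqP; apply: contraT => ntC.
  have nCX : X \subset 'N('C_N(D)) by rewrite normsI ?norms_cent.
  have [M minM sMC] := minnormal_exists ntC nCX.
  have sMN : M \subset N := subset_trans sMC (subsetIl _ _).
  have sMD : M \subset D by rewrite sub_gen // (bigcup_sup M) ?minM.
  have cMM : abelian M.
    exact: subset_trans (subset_trans sMC (subsetIr _ _)) (centS sMD).
  have nsMN : M <| N.
    by rewrite /normal sMN (subset_trans sNX); case/mingroupP: minM => /andP[].
  have := Fitting_max nsMN (abelian_nil cMM); rewrite F1 subG1.
  by case/mingroupP: minM => /andP[/negPf ->].
have c3 : [~: N, Q, D] = 1.
  apply: (three_subgroup (G:=Q) (H:=[group of D]) (K:=N)).
    have -> : [~: Q, D] = 1 by apply/commG1P; rewrite centsC.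
    exact: comm1G.
  apply/commG1P; apply: subset_trans cDQ; rewrite (commg_subl [group of D]).
  exact: subset_trans sNX nDX.
have : [~: N, Q] \subset 'C_N(D).
  by rewrite subsetI commg_subl (subset_trans sQX nNX); apply/commG1P.
rewrite CD1 subG1 => /eqP/commG1P; by rewrite centsC.
Qed.

Lemma dirB G N : minnormal N G -> N \subset IntF g G ->
  forall p, p \in \pi(N) -> (g p).-group (G / 'C_G(N)).
Proof.
move=> minN sNI p pN.
have [/andP[ntN nNG] _] := mingroupP minN.
have p_pr : prime p by move: pN; rewrite mem_primes => /andP[].
have pg := hg_self p_pr.
apply/pgroupP => q q_pr qd; apply: contraT => qg.
have [Q sylQ] := Sylow_exists q G; have /and3P[sQG qQ q'idx] := sylQ.
have [X FmX sQX] := exists_Fmax sQG (qgroup_inF qQ).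
have sNX : N \subset X by apply: subset_trans sNI _; apply: (bigcap_inf X FmX).
have /and3P[sXG FX _] := FmX.
have nNX : X \subset 'N(N) := subset_trans sXG nNG.
have cQN : Q \subset 'C(N).
  case: (boolP (abelian N)) => abN.
    have [_ _ /is_abelemP[r r_pr abr]] := minnormal_solvable minN (subxx N) (abelian_sol abN).
    have rN := abelem_pgroup abr.
    have pr : p = r by have := pnatPpi rN pN; rewrite inE => /eqP.
    rewrite -pr in rN.
    exact: abelian_case FX rN sNX qQ sQX qg pg N (subxx N) nNX.
  exact: nonabelian_case minN abN pN FX sNX nNX qQ sQX qg.
have sQC : Q \subset 'C_G(N) by rewrite subsetI sQG.
have nCG : G \subset 'N('C_G(N)) by rewrite normsI ?normG ?norms_cent.
move: qd; rewrite card_quotient // => qd.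
have qd2 : q %| #|G : Q| := dvdn_trans qd (indexgS G sQC).
have qpi : q \in \pi(#|G : Q|) by rewrite mem_primes q_pr indexg_gt0 qd2.
by have := pnatPpi q'idx qpi; rewrite !inE eqxx.
Qed.

Lemma commN_l (N Y : {group gT}) n y : Y \subset 'N(N) -> n \in N -> y \in Y -> [~ n, y] \in N.
Proof.
move=> nNY Nn Yy; rewrite commgEl groupM ?groupV // memJ_norm //; exact: subsetP nNY y Yy.
Qed.

Lemma commN_r (N Y : {group gT}) n y : Y \subset 'N(N) -> n \in N -> y \in Y -> [~ y, n] \in N.
Proof.
move=> nNY Nn Yy; rewrite commgEr groupM ?groupV // memJ_norm ?groupV //; exact: subsetP nNY y Yy.
Qed.

Lemma caseN X N Y B A p : inF g X -> X \subset 'N(N) -> N * X = Y ->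
  chief_factor Y B A -> N \subset B -> p \in \pi(A / B) ->
  (g p).-group (Y / sect_cent Y A B).
Proof.
move=> FX nNX defY cf sNB ppi.
have [pBA nBY nsAY maxB] := chiefP cf.
have sBA := proper_sub pBA; have [sAY nAY] := andP nsAY.
have sNY : N \subset Y by rewrite -defY mulG_subl.
have sXY : X \subset Y by rewrite -defY mulG_subr.
have nNY : Y \subset 'N(N) by rewrite -defY mul_subG ?normG.
have sNA := subset_trans sNB sBA.
pose A' := (X :&: A)%G; pose B' := (X :&: B)%G.
have defA : N * A' = A by rewrite /= group_modl // defY; apply/setIidPr.
have defB : N * B' = B by rewrite /= group_modl // defY; apply/setIidPr; exact: subset_trans sBA sAY.
have nA'X : X \subset 'N(A') by rewrite normsI ?normG // (subset_trans sXY nAY).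
have nB'X : X \subset 'N(B') by rewrite normsI ?normG // (subset_trans sXY nBY).
have sB'A' : B' \subset A' by rewrite setIS.
have XNM : forall M : {group gT}, X :&: N \subset M -> M \subset X -> X :&: (N * M) = M.
  move=> M sXNM sMX; rewrite -group_modr //; exact: (mulSGid (H := (X :&: N)%G)).
have sXNB' : X :&: N \subset B' by rewrite setIS.
have cf' : chief_factor X B' A'.
  apply: chief_intro; last 1 first.
  - move=> M pMA' nMX sB'M.
    have sMX : M \subset X := subset_trans (proper_sub pMA') (subsetIl _ _).
    have nNM : M \subset 'N(N) := subset_trans sMX nNX.
    pose NM := (N <*> M)%G.
    have defNM : NM :=: N * M by rewrite /= norm_joinEr.
    have nNMY : Y \subset 'N(NM).
      rewrite -defY mul_subG //; first exact: subset_trans (joing_subl N M) (normG _).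
      by rewrite normsY.
    have sBNM : B \subset NM by rewrite defNM -defB mulgS.
    have sNMA : NM \subset A by rewrite defNM -defA mulgS // proper_sub.
    have XNM' : X :&: NM = M by rewrite defNM XNM // (subset_trans sXNB').
    have pNMA : NM \proper A.
      rewrite properEneq sNMA andbT; apply: contraTneq pMA' => eNM.
      by rewrite /A' /= -eNM XNM' properxx.
    have := maxB NM pNMA nNMY sBNM => eNMB.
    by rewrite -XNM' eNMB.
  - rewrite properEneq sB'A' andbT; apply: contraTneq pBA => eB'A'.
    by rewrite -defA -defB eB'A' properxx.
  - exact: nB'X.
  - by rewrite /normal subsetIl nA'X.
have defA2 : B * A' = A.
  apply/eqP; rewrite eqEsubset mul_subG ?subsetIr //=.
  by rewrite -{1}defA mulSg.
have eB' : A' :&: B = B' by rewrite /= -setIA (setIidPr sBA).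
have ppi' : p \in \pi(A' / B').
  move: ppi; change (p \in \pi(#|A / B|) -> p \in \pi(#|A' / B'|)).
  rewrite card_quotient ?(subset_trans sAY nBY) // card_quotient ?(subset_trans (subsetIl _ _) nB'X) //.
  by rewrite -{1}defA2 indexMg -indexgI eB'.
have gX := inF_use FX cf' ppi'.
have nDY : Y \subset 'N(sect_cent Y A B) := sect_cent_norm nAY nBY.
pose D := Group (sect_cent_group A nBY).
have E : sect_cent X A' B' = X :&: D.
  apply/eqP; rewrite eqEsubset; apply/andP; split; apply/subsetP => x.
    case/sect_centP => Xx hx; rewrite inE Xx /=; apply/sect_centP; split; first exact: subsetP sXY x Xx.
    move=> a; rewrite -defA => /mulsgP[n a' Nn A'a' ->].
    rewrite commMgJ groupM //; last by apply: (subsetP (subsetIr X B)); exact: hx.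
    apply: (subsetP sNB); rewrite memJ_norm; first exact: commN_l nNY Nn (subsetP sXY x Xx).
    by apply: (subsetP nNY); apply: (subsetP sAY); apply: (subsetP (subsetIr X A)).
  rewrite inE => /andP[Xx /sect_centP[_ hx]]; apply/sect_centP; split => // a' /setIP[Xa' Aa'].
  by rewrite inE groupR // hx.
have sND : N \subset D.
  apply/subsetP => n Nn; apply/sect_centP; split; first exact: subsetP sNY n Nn.
  move=> a Aa; apply: (subsetP sNB); apply: commN_r Nn (subsetP sAY a Aa) => //.
have defY2 : D * X = Y.
  apply/eqP; rewrite eqEsubset mul_subG ?sect_cent_sub //= -{1}defY mulSg //.
pose C' := Group (sect_cent_group A' nB'X).
have nC'X : X \subset 'N(C') := sect_cent_norm nA'X nB'X.
move: gX; rewrite /pgroup (card_quotient (H := C') nC'X) (card_quotient (H := D) nDY) -defY2 indexMg.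
by have -> : gval C' = X :&: D := E; rewrite indexgI.
Qed.

Lemma inF_join G N X : G \subset 'N(N) -> X \subset G -> N \subset G -> inF g X ->
  (forall p, p \in \pi(N) -> (g p).-group (G / 'C_G(N))) ->
  inF g (N <*> X)%G.
Proof.
move=> nNG sXG sNG FX hyp.
have nNX := subset_trans sXG nNG.
set Y := (N <*> X)%G.
have defY : N * X = Y by rewrite /= norm_joinEr.
have sNY : N \subset Y by rewrite -defY mulG_subl.
have sXY : X \subset Y by rewrite -defY mulG_subr.
have nNY : Y \subset 'N(N) by rewrite -defY mul_subG ?normG.
have sYG : Y \subset G by rewrite -defY mul_subG.
apply: inF_intro => B A cf p ppi.
have [pBA nBY nsAY maxB] := chiefP cf.
have sBA := proper_sub pBA; have [sAY nAY] := andP nsAY.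
have nDY : Y \subset 'N(sect_cent Y A B) := sect_cent_norm nAY nBY.
pose D := Group (sect_cent_group A nBY).
have nNB : B \subset 'N(N) := subset_trans (subset_trans sBA sAY) nNY.
have nNA : A \subset 'N(N) := subset_trans sAY nNY.
pose NB := (N <*> B)%G.
have defNB : NB :=: N * B by rewrite /= norm_joinEr.
have nNBY : Y \subset 'N(NB) by rewrite normsY.
case: (boolP (A \subset NB)) => sANB.
  have pN : p \in \pi(N).
    move: ppi; change (p \in \pi(#|A / B|) -> p \in \pi(#|N|)).
    rewrite !mem_primes cardG_gt0 => /and3P[-> _ pd] /=.
    apply: dvdn_trans pd _; apply: dvdn_trans (dvdn_morphim (coset B) N).
    apply: cardSg; apply: subset_trans (quotientS B sANB) _; rewrite defNB quotientMidr.
    exact: subxx.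
  have sCD : 'C_Y(N) \subset D.
    apply/subsetP => x /setIP[Yx cNx]; apply/sect_centP; split => // a Aa.
    have : a \in N * B by rewrite -defNB (subsetP sANB).
    case/mulsgP => n b Nn Bb ->.
    have nx1 : [~ n, x] = 1 by apply/eqP/commgP; apply/esym; exact: (centP cNx).
    by rewrite commMgJ nx1 conj1g mul1g (commN_l nBY Bb Yx).
  have nCG : G \subset 'N('C_G(N)) by rewrite normsI ?normG ?norms_cent.
  rewrite /pgroup (card_quotient (H := D) nDY).
  apply: pnat_dvd (indexgS Y sCD) _.
  suff -> : #|Y : 'C_Y(N)%G| = #|Y / 'C_G(N)|.
    apply: pnat_dvd (hyp p pN); apply: cardSg; exact: quotientS.
  by rewrite card_quotient ?(subset_trans sYG nCG) // -(indexgI Y 'C_G(N)%G) setIA (setIidPl sYG).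
pose I := (NB :&: A)%G.
have IB : I :=: B.
  apply: maxB; last by rewrite subsetI joing_subr sBA.
    rewrite properEneq subsetIr andbT; apply: contraNneq sANB => <-; exact: subsetIl.
  by rewrite normsI.
pose NA := (N <*> A)%G.
have defNA : NA :=: N * A by rewrite /= norm_joinEr.
have NAe : NB * A = NA by rewrite defNA defNB -mulgA (mulSGid sBA).
have cf2 : chief_factor Y NB NA.
  apply: chief_intro => //.
  - rewrite properEneq defNB defNA mulgS // andbT; apply: contraNneq sANB => eq.
    by rewrite defNB eq mulG_subr.
  - by rewrite /normal join_subG sNY sAY normsY.
  - move=> M pM nMY sNBM.
    pose MA := (M :&: A)%G.
    have MAB : MA :=: B.
      apply: maxB; last by rewrite subsetI sBA (subset_trans (joing_subr N B) sNBM).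
        rewrite properEneq subsetIr andbT; apply: contraTneq pM => eMA.
        have sAM : A \subset M by rewrite -eMA subsetIl.
        have sNM : N \subset M := subset_trans (joing_subl N B) sNBM.
        by rewrite properE negb_and negbK defNA mul_subG ?orbT.
      by rewrite normsI.
    have : NB * (A :&: M) = NB * A :&: M by rewrite group_modl.
    rewrite NAe (setIidPr (proper_sub pM)) setIC.
    by rewrite [M :&: A]MAB mulGSid // joing_subr.
have ED : sect_cent Y NA NB = sect_cent Y A B.
  apply/eqP; rewrite eqEsubset; apply/andP; split; apply/subsetP => x /sect_centP[Yx hx];
    apply/sect_centP; split => //.
    move=> a Aa; rewrite -IB inE (commN_l nAY Aa Yx) andbT; apply: hx.
    by rewrite defNA (subsetP (mulG_subr N A)).
  move=> z; rewrite defNA => /mulsgP[n a Nn Aa ->].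
  rewrite commMgJ groupM //; last by rewrite defNB (subsetP (mulG_subr N B)) ?hx.
  rewrite defNB (subsetP (mulG_subl B N)) // memJ_norm; first exact: commN_l nNY Nn Yx.
  exact: subsetP nNA a Aa.
have ppi2 : p \in \pi(NA / NB).
  move: ppi; change (p \in \pi(#|A / B|) -> p \in \pi(#|NA / NB|)).
  rewrite card_quotient ?(subset_trans sAY nBY) // card_quotient; last first.
    by rewrite join_subG (subset_trans sNY nNBY) (subset_trans sAY nNBY).
  have IB' : NB :&: A = B := IB.
  by rewrite -NAe indexMg -(indexgI A NB) setIC IB'.
rewrite -ED; exact: caseN FX nNX defY cf2 (joing_subl N B) ppi2.
Qed.

Lemma dirA G N : G \subset 'N(N) -> N \subset G ->
  (forall p, p \in \pi(N) -> (g p).-group (G / 'C_G(N))) -> N \subset IntF g G.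
Proof.
move=> nNG sNG hyp; apply/bigcapsP => X FmX.
have /and3P[sXG FX /forallP maxX] := FmX.
have := maxX (N <*> X)%G; rewrite joing_subr join_subG sNG sXG (inF_join nNG sXG sNG FX hyp) /= => /eqP <-.
exact: joing_subl.
Qed.

Lemma quo_cent G H K : K <| G -> H <| G ->
  #|(G / K) / 'C_(G / K)(H / K)| = #|G / sect_cent G H K|.
Proof.
move=> /andP[sKG nKG] /andP[sHG nHG].
pose C := Group (sect_cent_group H nKG).
have nCG : G \subset 'N(C) := sect_cent_norm nHG nKG.
have sCG : C \subset G := sect_cent_sub _ _ _.
have sKC : K \subset C.
  apply/subsetP => k Kk; apply/sect_centP; split; first exact: subsetP sKG k Kk.
  move=> h Hh; exact: commN_r nKG Kk (subsetP sHG h Hh).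
have E : C / K = 'C_(G / K)(H / K).
  apply/eqP; rewrite eqEsubset; apply/andP; split; apply/subsetP => xb.
    case/morphimP => x Nx Cx ->; have /sect_centP[Gx hx] := Cx.
    rewrite inE mem_quotient //=; apply/centP => yb /morphimP[h Nh Hh ->].
    apply/esym/commgP; rewrite -morphR // /= coset_id //; exact: hx.
  case/setIP => /morphimP[x Nx Gx ->] cx.
  apply: mem_quotient; apply/sect_centP; split => // h Hh.
  have Nh : h \in 'N(K) := subsetP nKG h (subsetP sHG h Hh).
  apply: coset_idr; first by rewrite groupR.
  rewrite morphR //; apply/eqP/commgP; apply/esym; apply: (centP cx).
  exact: mem_quotient.
rewrite -E card_quotient ?quotient_norms // (card_quotient nCG).
by rewrite index_quotient_eq // subIset // sKC orbT.
Qed.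
End S.

Unset Implicit Arguments.

Theorem mainTheorem13 (g : nat -> nat_pred)
  (hg_self : forall p : nat, prime p -> p \in g p)
  (hg_primes : forall p q : nat, prime p -> q \in g p -> prime q)
  (gT : finGroupType) (G K H : {group gT})
  (nKG : K <| G) (chiefHK : chief_factor G K H) :
  (H / K \subset IntF g (G / K)) <->
  (forall p : nat, p \in \pi(H / K) -> (g p).-group (G / sect_cent G H K)).
Proof.
have nsHG : H <| G by case/andP: chiefHK.
have [sHG nHG] := andP nsHG.
have minN := chief_factor_minnormal chiefHK.
have [/andP[_ nNG] _] := mingroupP minN.
have sNG : H / K \subset G / K := quotientS K sHG.
split.
  move=> sI p pN; have := dirB hg_self minN sI pN.
  by rewrite /pgroup quo_cent.
move=> hyp; apply: (dirA nNG sNG) => p pN.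
by rewrite /pgroup quo_cent //; apply: hyp.
Qed.
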